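(* Let $x,y\in\mathbb{B}^2\setminus\{0\}$ be such that $0,x,y$ are noncollinear and $|x|\ne|y|$. Let $S^1(a,r_a)$ be the circle through $x,y,x^*,y^*$ (it is orthogonal to $S^1$), let $\{x_*,y_*\}=S^1\cap S^1(a,r_a)$ labelled so that $x_*,x,y,y_*$ occur in this order on the arc of $S^1(a,r_a)$ inside $\overline{\mathbb{B}^2}$, and let $\sigma$ be the arc of $S^1(a,r_a)$ with endpoints $x^*,y^*$ containing $x,y$. Let $S^1(c,r_c)$ be the circle through $0,x,y$, let $z$ be the point of $L(0,c)\cap S^1(a,r_a)$ in $\mathbb{B}^2$ and $z'$ the point of $L(0,c)\cap S^1(a,r_a)$ in $\mathbb{R}^2\setminus\mathbb{B}^2$. Let $b=L(x_*,y)\cap L(x,y^* )$, $d=L(x^*,y)\cap L(x_*,y^* )$, $b'=L(x,y_* )\cap L(x^*,y)$, $d'=L(x,y^* )\cap L(x^*,y_* )$. Then: (1) if $\sigma$ is a semicircle, then $z$ is the hyperbolic midpoint of the hyperbolic segment $J[x,y]$, the circle $S^1(c,r_c)$ is orthogonal to $S^1(a,r_a)$, and $|z,x,x^*,z'|=|z,y,y^*,z'|$; (2) the points $0,b,d$ are collinear, and the points $0,b',d'$ are collinear.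
   Context: $\mathbb{B}^2$ is the unit disk, $S^1$ the unit circle, $S^1(c,r)$ the circle with centre $c$ and radius $r$, $L(p,q)$ the line through $p,q$; $x^*=x/|x|^2$. For distinct points $p,q,r,s\in\mathbb{R}^2$ the absolute ratio is $|p,q,r,s|=\frac{|p-r||q-s|}{|p-q||r-s|}$. The hyperbolic distance on $\mathbb{B}^2$ satisfies $\sinh\frac{\rho(x,y)}{2}=\frac{|x-y|}{\sqrt{1-|x|^2}\sqrt{1-|y|^2}}$; $J[x,y]$ is the arc of $S^1(a,r_a)$ between $x$ and $y$, and its hyperbolic midpoint is the $z\in J[x,y]$ with $\rho(x,z)=\rho(z,y)$. *)

(* Defs.v *)
From Stdlib Require Import Reals Lra.
Open Scope R_scope.

Definition pt := (R * R)%type.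

Definition padd (p q : pt) : pt := (fst p + fst q, snd p + snd q).
Definition psub (p q : pt) : pt := (fst p - fst q, snd p - snd q).
Definition pscale (t : R) (p : pt) : pt := (t * fst p, t * snd p).
Definition dot (p q : pt) : R := fst p * fst q + snd p * snd q.
Definition norm (p : pt) : R := sqrt (dot p p).
Definition dist (p q : pt) : R := norm (psub p q).
Definition origin : pt := (0, 0).

Definition inv_pt (x : pt) : pt := pscale (/ (dot x x)) x.

Definition on_circle (c : pt) (r : R) (p : pt) : Prop := dist p c = r.

Definition on_line (u v p : pt) : Prop := exists t : R, p = padd u (pscale t (psub v u)).

Definition collinear (p q s : pt) : Prop :=
  (fst q - fst p) * (snd s - snd p) - (snd q - snd p) * (fst s - fst p) = 0.

Definition circ_pt (a : pt) (r t : R) : pt := padd a (pscale r (cos t, sin t)).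

Definition arc_order4_in_closed_disk (a : pt) (r : R) (p1 p2 p3 p4 : pt) : Prop :=
  exists t1 t2 t3 t4 : R,
    ((t1 < t2 /\ t2 < t3 /\ t3 < t4) \/ (t4 < t3 /\ t3 < t2 /\ t2 < t1)) /\
    Rabs (t4 - t1) < 2 * PI /\
    p1 = circ_pt a r t1 /\ p2 = circ_pt a r t2 /\
    p3 = circ_pt a r t3 /\ p4 = circ_pt a r t4 /\
    (forall t, Rmin t1 t4 <= t <= Rmax t1 t4 -> norm (circ_pt a r t) <= 1).

Definition on_J (a : pt) (r : R) (x y w : pt) : Prop :=
  exists t1 t2 t3 : R,
    ((t1 <= t2 /\ t2 <= t3) \/ (t3 <= t2 /\ t2 <= t1)) /\
    Rabs (t3 - t1) < 2 * PI /\
    x = circ_pt a r t1 /\ w = circ_pt a r t2 /\ y = circ_pt a r t3 /\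
    (forall t, Rmin t1 t3 <= t <= Rmax t1 t3 -> norm (circ_pt a r t) < 1).

Definition rho (x y : pt) : R :=
  2 * arcsinh (dist x y / (sqrt (1 - norm x ^ 2) * sqrt (1 - norm y ^ 2))).

Definition hyp_midpoint_J (a : pt) (r : R) (x y z : pt) : Prop :=
  on_J a r x y z /\ rho x z = rho z y.

(* the arc of S^1(a, r) with endpoints p, q is a semicircle:
   p, q lie on the circle and are diametrically opposite *)
Definition semicircle_endpoints (a : pt) (r : R) (p q : pt) : Prop :=
  on_circle a r p /\ on_circle a r q /\ a = pscale (/ 2) (padd p q).

(* the circles S^1(a, ra) and S^1(c, rc) are orthogonal: they meet at a point
   where the radii (equivalently the tangents) are perpendicular *)
Definition orthogonal_circles (a : pt) (ra : R) (c : pt) (rc : R) : Prop :=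
  exists p, on_circle a ra p /\ on_circle c rc p /\ dot (psub p a) (psub p c) = 0.

Definition abs_ratio (p q r s : pt) : R :=
  dist p r * dist q s / (dist p q * dist r s).

(* Main.v *)
Require Import Defs.
From Stdlib Require Import Reals.
Open Scope R_scope.
From Stdlib Require Import Lra Psatz.

Definition cross (p q : pt) : R := fst p * snd q - snd p * fst q.


Lemma homology (a P1 P2 Q1 Q2 P1' P2' Q1' Q2' b d : pt) :
  P1 = pscale (2*dot a P1 - 1) P1' -> P2 = pscale (2*dot a P2 - 1) P2' ->
  Q1 = pscale (2*dot a Q1 - 1) Q1' -> Q2 = pscale (2*dot a Q2 - 1) Q2' ->
  on_line P1 P2 b -> on_line Q1 Q2 b -> on_line P1' P2' d -> on_line Q1' Q2' d ->
  cross (psub P2' P1') (psub Q2' Q1') <> 0 -> collinear origin b d.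
Proof.
  intros E1 E2 E3 E4 [s Hb1] [r Hb2] [al Hd1] [be Hd2] HK.
  set (l1 := 2*dot a P1 - 1) in *. set (l2 := 2*dot a P2 - 1) in *.
  set (l3 := 2*dot a Q1 - 1) in *. set (l4 := 2*dot a Q2 - 1) in *.
  set (mu := 2 * dot a b - 1).
  assert (Hm1 : mu = (1-s)*l1 + s*l2).
  { unfold mu, l1, l2; rewrite Hb1; unfold dot, padd, pscale, psub; simpl; ring. }
  assert (Hm2 : mu = (1-r)*l3 + r*l4).
  { unfold mu, l3, l4; rewrite Hb2; unfold dot, padd, pscale, psub; simpl; ring. }
  clearbody l1 l2 l3 l4 mu.
  destruct P1 as [p1 p2], P2 as [q1 q2], Q1 as [m1 m2], Q2 as [n1 n2].
  destruct P1' as [p1' p2'], P2' as [q1' q2'], Q1' as [m1' m2'], Q2' as [n1' n2'].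
  destruct b as [b1 b2], d as [d1 d2].
  unfold pscale, padd, psub, cross, collinear, origin in *; simpl in *.
  injection E1 as E1a E1b. injection E2 as E2a E2b. injection E3 as E3a E3b. injection E4 as E4a E4b.
  injection Hb1 as B1 B2. injection Hb2 as B3 B4. injection Hd1 as D1 D2. injection Hd2 as D3 D4.
  subst p1 p2 q1 q2 m1 m2 n1 n2 b1 b2.
  set (k1 := s*l2 - mu*al). set (k2 := r*l4 - mu*be).
  assert (V1 : k1 * (q1' - p1') = k2 * (n1' - m1')).
  { unfold k1, k2.
    transitivity (l1 * p1' + s * (l2 * q1' - l1 * p1') - mu*(p1' + al*(q1'-p1'))).
    - rewrite Hm1; ring.
    - rewrite <- D1, D3, B3, Hm2. ring. }
  assert (V2 : k1 * (q2' - p2') = k2 * (n2' - m2')).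
  { unfold k1, k2.
    transitivity (l1 * p2' + s * (l2 * q2' - l1 * p2') - mu*(p2' + al*(q2'-p2'))).
    - rewrite Hm1; ring.
    - rewrite <- D2, D4, B4, Hm2. ring. }
  assert (Hk : k1 = 0).
  { assert (k1 * ((q1' - p1') * (n2' - m2') - (q2' - p2') * (n1' - m1')) = 0).
    { transitivity (k1 * (q1' - p1') * (n2' - m2') - k1*(q2' - p2') * (n1' - m1')). ring.
      rewrite V1, V2; ring. }
    apply Rmult_integral in H; destruct H; [auto| contradiction]. }
  unfold k1 in Hk.
  rewrite D1, D2.
  transitivity (((1 - s) * l1 * p1' + s * l2 * q1' - mu * (p1' + al * (q1' - p1'))) * (p2' + al * (q2' - p2'))
     - ((1 - s) * l1 * p2' + s * l2 * q2' - mu* (p2' + al * (q2' - p2'))) * (p1' + al * (q1' - p1'))).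
  ring.
  replace ((1 - s) * l1 * p1' + s * l2 * q1' - mu * (p1' + al * (q1' - p1'))) with ((s*l2 - mu*al)*(q1'-p1')) by (rewrite Hm1; ring).
  replace ((1 - s) * l1 * p2' + s * l2 * q2' - mu * (p2' + al * (q2' - p2'))) with ((s*l2 - mu*al)*(q2'-p2')) by (rewrite Hm1; ring).
  rewrite Hk; ring.
Qed.
Lemma circle3 (a p q w : pt) (r2 : R) :
  (fst p - fst a)^2 + (snd p - snd a)^2 = r2 ->
  (fst q - fst a)^2 + (snd q - snd a)^2 = r2 ->
  (fst w - fst a)^2 + (snd w - snd a)^2 = r2 ->
  p <> q -> p <> w -> q <> w -> cross (psub q p) (psub w p) <> 0.
Proof.
  destruct a as [a1 a2], p as [p1 p2], q as [q1 q2], w as [w1 w2].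
  unfold cross, psub; simpl. intros Ep Eq Ew Hpq Hpw Hqw Hc.
  set (u1 := q1 - p1) in *. set (u2 := q2 - p2) in *.
  set (v1 := w1 - p1) in *. set (v2 := w2 - p2) in *.
  assert (Hu : u1*u1 + u2*u2 <> 0).
  { intro H. assert (u1 = 0) by nra. assert (u2 = 0) by nra.
    apply Hpq. unfold u1, u2 in *. f_equal; lra. }
  assert (Eu : 2*((p1-a1)*u1 + (p2-a2)*u2) + (u1*u1+u2*u2) = 0).
  { unfold u1, u2. nra. }
  assert (Ev : 2*((p1-a1)*v1 + (p2-a2)*v2) + (v1*v1+v2*v2) = 0).
  { unfold v1, v2. nra. }
  set (t := (u1*v1+u2*v2)/(u1*u1+u2*u2)).
  assert (Hv1 : v1 = t*u1).
  { unfold t. field_simplify_eq; [|auto].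
    replace (u1*u2*v2) with (u2*(u1*v2)) by ring. rewrite (Rminus_diag_uniq _ _ Hc). ring. }
  assert (Hv2 : v2 = t*u2).
  { unfold t. field_simplify_eq; [|auto].
    replace (u1*v1*u2) with (u1*(u2*v1)) by ring. rewrite <- (Rminus_diag_uniq _ _ Hc). ring. }
  clearbody t. rewrite Hv1, Hv2 in Ev.
  assert (Ht : t*(t-1)*(u1*u1+u2*u2) = 0).
  { replace (t*(t-1)*(u1*u1+u2*u2)) with
      (2 * ((p1 - a1) * (t * u1) + (p2 - a2) * (t * u2)) + (t * u1 * (t * u1) + t * u2 * (t * u2))
       - t * (2*((p1-a1)*u1 + (p2-a2)*u2) + (u1*u1+u2*u2))) by ring.
    rewrite Ev, Eu; ring. }
  apply Rmult_integral in Ht. destruct Ht as [Ht|Ht]; [|contradiction].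
  apply Rmult_integral in Ht. destruct Ht as [Ht|Ht].
  - subst t. apply Hpw. unfold v1, v2, u1, u2 in *. f_equal; lra.
  - assert (t = 1) by lra. subst t. apply Hqw. unfold v1, v2, u1, u2 in *. f_equal; lra.
Qed.

Lemma nonpar (a P1 P2 Q1 Q2 d : pt) (r2 : R) :
  (fst P1 - fst a)^2 + (snd P1 - snd a)^2 = r2 ->
  (fst P2 - fst a)^2 + (snd P2 - snd a)^2 = r2 ->
  (fst Q1 - fst a)^2 + (snd Q1 - snd a)^2 = r2 ->
  P1 <> P2 -> P1 <> Q1 -> P2 <> Q1 ->
  on_line P1 P2 d -> on_line Q1 Q2 d -> cross (psub P2 P1) (psub Q2 Q1) <> 0.
Proof.
  intros E1 E2 E3 H12 H13 H23 [al Hd1] [be Hd2] HK.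
  apply (circle3 a P1 P2 Q1 r2 E1 E2 E3 H12 H13 H23).
  rewrite Hd1 in Hd2. clear Hd1.
  destruct P1 as [p1 p2], P2 as [q1 q2], Q1 as [m1 m2], Q2 as [n1 n2].
  unfold cross, psub, padd, pscale in *; simpl in *.
  injection Hd2 as Ha Hb.
  assert (Hm1 : m1 = p1 + al*(q1-p1) - be*(n1-m1)) by lra.
  assert (Hm2 : m2 = p2 + al*(q2-p2) - be*(n2-m2)) by lra.
  replace ((q1 - p1) * (m2 - p2) - (q2 - p2) * (m1 - p1)) with
   (- be * ((q1 - p1) * (n2 - m2) - (q2 - p2) * (n1 - m1))).
  rewrite HK; ring.
  rewrite Hm1 at 2. rewrite Hm2 at 2. ring.
Qed.
Lemma norm_sq p : norm p ^ 2 = fst p ^ 2 + snd p ^ 2.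
Proof. unfold norm, dot. rewrite pow2_sqrt; [ring | nra]. Qed.

Lemma dist_sq p q : Defs.dist p q ^ 2 = (fst p - fst q) ^ 2 + (snd p - snd q) ^ 2.
Proof. unfold Defs.dist. rewrite norm_sq. unfold psub; simpl. ring. Qed.

Lemma norm_ge0 p : 0 <= norm p.
Proof. apply sqrt_pos. Qed.

Lemma circ_norm_sq (a : pt) ra t : fst a ^2 + snd a ^2 = 1 + ra^2 ->
  norm (circ_pt a ra t) ^ 2 = 1 + 2 * ra * (ra + fst a * cos t + snd a * sin t).
Proof.
  intro Ha. rewrite norm_sq. destruct a as [A B]; unfold circ_pt, padd, pscale; simpl in *.
  pose proof (sin2_cos2 t). unfold Rsqr in H. nra.
Qed.

Lemma phi_shift (A B ra t0 e : R) : ra + A * cos t0 + B * sin t0 = 0 ->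
  ra + A * cos (t0 + e) + B * sin (t0 + e) = ra * (1 - cos e) + (B * cos t0 - A * sin t0) * sin e.
Proof. intro H. rewrite cos_plus, sin_plus.
  transitivity (ra * (1 - cos e) + (B * cos t0 - A * sin t0) * sin e + cos e * (ra + A * cos t0 + B * sin t0)).
  ring. rewrite H; ring. Qed.

Lemma interior_strict (a : pt) (ra lo hi t0 : R) : 0 < ra ->
  fst a ^2 + snd a ^2 = 1 + ra^2 ->
  (forall t, lo <= t <= hi -> norm (circ_pt a ra t) <= 1) -> lo < t0 < hi ->
  norm (circ_pt a ra t0) < 1.
Proof.
  intros Hra Ha Hle Ht0.
  destruct a as [A B]; simpl in Ha.
  assert (Hphi : forall t, lo <= t <= hi -> ra + A * cos t + B * sin t <= 0).
  { intros t Ht. specialize (Hle t Ht). pose proof (circ_norm_sq (A,B) ra t Ha) as E.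
    simpl in E. pose proof (norm_ge0 (circ_pt (A, B) ra t)). nra. }
  destruct (Rlt_or_le (norm (circ_pt (A,B) ra t0)) 1) as [H|H]; [exact H|exfalso].
  assert (H0 : ra + A * cos t0 + B * sin t0 = 0).
  { pose proof (circ_norm_sq (A,B) ra t0 Ha) as E. simpl in E.
    specialize (Hphi t0 ltac:(lra)). nra. }
  set (D := B * cos t0 - A * sin t0).
  destruct (Rtotal_order D 0) as [HD|[HD|HD]].
  - set (h := Rmin (t0 - lo) 1).
    assert (Hh : 0 < h <= 1). { unfold h. split. apply Rmin_pos; lra. apply Rmin_r. }
    assert (Hh2 : h <= t0 - lo) by apply Rmin_l.
    pose proof (phi_shift A B ra t0 (- h) H0) as E. fold D in E.
    rewrite cos_neg, sin_neg in E.
    assert (0 < sin h). { apply sin_gt_0; pose proof PI2_1; lra. }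
    pose proof (COS_bound h).
    specialize (Hphi (t0 + - h) ltac:(lra)). nra.
  - pose proof (sin2_cos2 t0). unfold Rsqr in H1. unfold D in HD.
    assert ((A * cos t0 + B * sin t0)^2 + (B * cos t0 - A * sin t0)^2 = (A^2+B^2)*(sin t0 * sin t0 + cos t0 * cos t0)) by ring.
    rewrite H1, HD in H2.
    assert (A * cos t0 + B * sin t0 = - ra) by lra. rewrite H3 in H2. nra.
  - set (h := Rmin (hi - t0) 1).
    assert (Hh : 0 < h <= 1). { unfold h. split. apply Rmin_pos; lra. apply Rmin_r. }
    assert (Hh2 : h <= hi - t0) by apply Rmin_l.
    pose proof (phi_shift A B ra t0 h H0) as E. fold D in E.
    assert (0 < sin h). { apply sin_gt_0; pose proof PI2_1; lra. }
    pose proof (COS_bound h).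
    specialize (Hphi (t0 + h) ltac:(lra)). nra.
Qed.

Lemma L_circ a r p : on_circle a r p -> 0 < r ->
  dot p p - 2 * dot a p + (dot a a - r * r) = 0.
Proof. intros H Hr. unfold on_circle in H.
  assert (E : Defs.dist p a ^ 2 = r ^ 2) by (rewrite H; ring).
  rewrite dist_sq in E. destruct p, a; unfold dot; simpl in *. nra. Qed.

Lemma L_circ2 a r p : on_circle a r p ->
  (fst p - fst a)^2 + (snd p - snd a)^2 = r ^ 2.
Proof. intros H. rewrite <- dist_sq. unfold on_circle in H. rewrite H. ring. Qed.

Lemma L_lt1 p : norm p < 1 -> dot p p < 1.
Proof. intro H. pose proof (norm_sq p). pose proof (norm_ge0 p). unfold dot. nra. Qed.
Lemma L_ge1 p : 1 <= norm p -> 1 <= dot p p.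
Proof. intro H. pose proof (norm_sq p). pose proof (norm_ge0 p). unfold dot. nra. Qed.
Lemma L_eq1 p : norm p = 1 -> dot p p = 1.
Proof. intro H. pose proof (norm_sq p). unfold dot. rewrite H in H0. nra. Qed.
Lemma L_pos p : p <> origin -> 0 < dot p p.
Proof. intro H. destruct p as [p1 p2]; unfold dot; simpl.
  destruct (Req_dec p1 0); destruct (Req_dec p2 0); try nra.
  subst. exfalso; apply H; reflexivity. Qed.

Lemma inv_dot p : dot p p <> 0 -> dot (inv_pt p) (inv_pt p) = / dot p p.
Proof. intro H. destruct p as [p1 p2]; unfold inv_pt, pscale, dot in *; simpl in *. field. auto. Qed.
Lemma inv_dota a p : dot p p <> 0 -> dot a (inv_pt p) = dot a p / dot p p.
Proof. intro H. destruct p as [p1 p2]; unfold inv_pt, pscale, dot in *; simpl in *. field. auto. Qed.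
Lemma inv_inv p : dot p p <> 0 -> inv_pt (inv_pt p) = p.
Proof. intro H. pose proof (inv_dot p H) as E. unfold inv_pt at 1. rewrite E.
  destruct p as [p1 p2]; unfold inv_pt, pscale, dot in *; simpl in *. f_equal; field; auto. Qed.

Lemma lamA a p : dot p p <> 0 -> dot p p - 2*dot a p + 1 = 0 -> p = pscale (2*dot a p - 1) (inv_pt p).
Proof. intros H E. replace (2*dot a p - 1) with (dot p p) by lra.
  destruct p as [p1 p2]; unfold inv_pt, pscale, dot in *; simpl in *. f_equal; field; auto. Qed.
Lemma lamB a p : dot p p <> 0 -> dot p p - 2*dot a p + 1 = 0 -> inv_pt p = pscale (2*dot a (inv_pt p) - 1) p.
Proof. intros H E. rewrite inv_dota by auto.
  replace (2 * (dot a p / dot p p) - 1) with (/ dot p p).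
  reflexivity. replace (dot a p) with ((dot p p + 1)/2) by lra. field; auto. Qed.
Lemma lamC a p : dot a p = 1 -> p = pscale (2*dot a p - 1) p.
Proof. intros H. rewrite H. destruct p; unfold pscale; simpl; f_equal; ring. Qed.

Lemma neq_by_dot p q : dot p p <> dot q q -> p <> q.
Proof. intros H E; subst; auto. Qed.

Lemma orthoA a ra x : 0 < ra -> 0 < dot x x < 1 -> on_circle a ra x -> on_circle a ra (inv_pt x) ->
  dot a a = 1 + ra * ra.
Proof. intros Hr Hq C1 C2.
  pose proof (L_circ _ _ _ C1 Hr) as E1. pose proof (L_circ _ _ _ C2 Hr) as E2.
  rewrite inv_dot, inv_dota in E2 by lra.
  set (q := dot x x) in *. set (ax := dot a x) in *. set (P := dot a a - ra * ra) in *.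
  assert (E3 : 1 - 2*ax + P*q = 0).
  { replace (1 - 2*ax + P*q) with (q * (/ q - 2 * (ax / q) + P)) by (field; lra). rewrite E2; ring. }
  assert ((1 - q) * (1 - P) = 0) by nra.
  apply Rmult_integral in H. destruct H; [lra|]. unfold P in *. lra.
Qed.

Lemma pow1 a ra p : 0 < ra -> dot a a = 1 + ra * ra -> on_circle a ra p ->
  dot p p - 2 * dot a p + 1 = 0.
Proof. intros Hr Ha C. pose proof (L_circ _ _ _ C Hr). lra. Qed.

Lemma dotxs a ra p : 0 < ra -> dot a a = 1 + ra * ra -> on_circle a ra p -> norm p = 1 -> dot a p = 1.
Proof. intros Hr Ha C N. pose proof (pow1 _ _ _ Hr Ha C). pose proof (L_eq1 _ N). lra. Qed.

Lemma inv_big p : 0 < dot p p < 1 -> 1 < dot (inv_pt p) (inv_pt p).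
Proof. intros H. rewrite inv_dot by lra. rewrite <- Rinv_1. apply Rinv_lt_contravar; lra. Qed.

Theorem part2
  (x y a : pt) (ra : R) (xs ys : pt) (b d b' d' : pt) :
  norm x < 1 -> norm y < 1 -> x <> origin -> y <> origin -> norm x <> norm y ->
  0 < ra ->
  on_circle a ra x -> on_circle a ra y ->
  on_circle a ra (inv_pt x) -> on_circle a ra (inv_pt y) ->
  norm xs = 1 -> norm ys = 1 -> on_circle a ra xs -> on_circle a ra ys ->
  on_line xs y b -> on_line x (inv_pt y) b ->
  on_line (inv_pt x) y d -> on_line xs (inv_pt y) d ->
  on_line x ys b' -> on_line (inv_pt x) y b' ->
  on_line x (inv_pt y) d' -> on_line (inv_pt x) ys d' ->
  collinear origin b d /\ collinear origin b' d'.
Proof.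
  intros Nx Ny Hx0 Hy0 Hn Hra Cx Cy Cxi Cyi Nxs Nys Cxs Cys Lb1 Lb2 Ld1 Ld2 Lb1' Lb2' Ld1' Ld2'.
  pose proof (L_lt1 _ Nx) as Qx1. pose proof (L_lt1 _ Ny) as Qy1.
  pose proof (L_pos _ Hx0) as Qx0. pose proof (L_pos _ Hy0) as Qy0.
  assert (Ha : dot a a = 1 + ra*ra) by (apply (orthoA a ra x); auto).
  pose proof (pow1 _ _ _ Hra Ha Cx) as Px. pose proof (pow1 _ _ _ Hra Ha Cy) as Py.
  pose proof (dotxs _ _ _ Hra Ha Cxs Nxs) as Axs. pose proof (dotxs _ _ _ Hra Ha Cys Nys) as Ays.
  pose proof (L_eq1 _ Nxs) as Qxs. pose proof (L_eq1 _ Nys) as Qys.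
  pose proof (inv_big x (conj Qx0 Qx1)) as Ix. pose proof (inv_big y (conj Qy0 Qy1)) as Iy.
  assert (Hxy : dot x x <> dot y y).
  { intro E. apply Hn. unfold norm. rewrite E. reflexivity. }
  assert (Hixy : inv_pt x <> inv_pt y).
  { intro E. apply Hxy. rewrite <- (inv_inv x), <- (inv_inv y) by lra. rewrite E. reflexivity. }
  split.
  - apply (homology a xs y x (inv_pt y) xs (inv_pt y) (inv_pt x) y b d); auto.
    + apply lamC; auto.
    + apply lamA; lra.
    + apply lamA; lra.
    + apply lamB; lra.
    + apply (nonpar a xs (inv_pt y) (inv_pt x) y d (ra^2)); try apply L_circ2; auto.
      all: first [apply neq_by_dot; lra | intro E; apply Hixy; auto].
  - apply (homology a x ys (inv_pt x) y (inv_pt x) ys x (inv_pt y) b' d'); auto.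
    + apply lamA; lra.
    + apply lamC; auto.
    + apply lamB; lra.
    + apply lamA; lra.
    + apply (nonpar a (inv_pt x) ys x (inv_pt y) d' (ra^2)); try apply L_circ2; auto.
      all: apply neq_by_dot; lra.
Qed.

Definition Dsq (p q : pt) : R := (fst p - fst q) ^ 2 + (snd p - snd q) ^ 2.

Lemma sq_inj u v : 0 <= u -> 0 <= v -> u ^ 2 = v ^ 2 -> u = v.
Proof. intros. nra. Qed.

Lemma circ_pow a ra t : dot a a = 1 + ra * ra ->
  dot (circ_pt a ra t) (circ_pt a ra t) - 2 * dot a (circ_pt a ra t) + 1 = 0.
Proof. intros Ha. pose proof (sin2_cos2 t). unfold Rsqr in H.
  destruct a as [a1 a2]; unfold circ_pt, dot, padd, pscale in *; simpl in *. nra. Qed.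

Definition nvec (x y a : pt) : pt :=
  ((fst a - fst x) * (1 - dot y y) - (fst a - fst y) * (1 - dot x x),
   (snd a - snd x) * (1 - dot y y) - (snd a - snd y) * (1 - dot x x)).

Lemma gid x y a w : dot w w - 2 * dot a w + 1 = 0 ->
  Dsq x w * (1 - dot y y) - Dsq y w * (1 - dot x x) = 2 * dot (nvec x y a) w.
Proof. intro E. destruct x, y, a, w; unfold Dsq, nvec, dot in *; simpl in *. nra. Qed.

Lemma line0 c z : on_line origin c z -> exists t, z = pscale t c.
Proof. intros [t H]. exists t. rewrite H. destruct c; unfold padd, pscale, psub, origin; simpl; f_equal; ring. Qed.

Lemma uniq_root C s t : 0 <= C -> s*s*C - s + 1 = 0 -> t*t*C - t + 1 = 0 -> s*s*C < 1 -> t*t*C < 1 -> s = t.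
Proof. intros HC Hs Ht Hs1 Ht1. destruct (Req_dec s t) as [|Hne]; auto. exfalso.
  assert (E : (s - t) * (C * (s + t) - 1) = 0) by nra.
  apply Rmult_integral in E. destruct E as [E|E]; [lra|].
  assert (E2 : s * t * C = 1) by nra.
  assert (0 <= s*s*C) by nra. assert (0 <= t*t*C) by nra.
  assert ((s*s*C)*(t*t*C) = 1) by (replace ((s*s*C)*(t*t*C)) with ((s*t*C)*(s*t*C)) by ring; rewrite E2; ring).
  nra. Qed.


Lemma inv_root C t t' : 0 <= C -> t*t*C - t + 1 = 0 -> t'*t'*C - t' + 1 = 0 -> t*t*C < 1 -> 1 <= t'*t'*C -> t * t' * C = 1.
Proof. intros HC Hs Ht Hs1 Ht1. destruct (Req_dec t t') as [E|Hne].
  - subst. lra.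
  - assert (E : (t - t') * (C * (t + t') - 1) = 0) by nra.
    apply Rmult_integral in E. destruct E as [E|E]; [lra|]. nra. Qed.

Lemma between t1 t2 t3 t4 : ((t1 < t2 /\ t2 < t3 /\ t3 < t4) \/ (t4 < t3 /\ t3 < t2 /\ t2 < t1)) ->
  forall t, Rmin t2 t3 <= t <= Rmax t2 t3 -> Rmin t1 t4 < t < Rmax t1 t4.
Proof. intros H t. unfold Rmin, Rmax.
  destruct (Rle_dec t2 t3); destruct (Rle_dec t1 t4); lra. Qed.

Lemma Gcont (n a : pt) ra : continuity (fun t => fst n * (fst a + ra * cos t) + snd n * (snd a + ra * sin t)).
Proof. reg. Qed.

Lemma dist_Dsq p q : Defs.dist p q ^ 2 = Dsq p q.
Proof. apply dist_sq. Qed.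

Lemma dist_pos p q : 0 < Dsq p q -> 0 < Defs.dist p q.
Proof. intro H. pose proof (dist_Dsq p q). pose proof (sqrt_pos (dot (psub p q) (psub p q))).
  unfold Defs.dist, norm in *. nra. Qed.

Lemma absr p w : 0 < dot p p -> 0 < dot w w -> 0 < Dsq p w ->
  abs_ratio w p (inv_pt p) (inv_pt w) = (Dsq p w + (1 - dot p p) * (1 - dot w w)) / Dsq p w.
Proof.
  intros Hp Hw HD.
  destruct p as [p1 p2], w as [w1 w2].
  set (q := dot (p1,p2) (p1,p2)) in *. set (qw := dot (w1,w2) (w1,w2)) in *.
  set (Q := q * qw - 2 * (p1 * w1 + p2 * w2) + 1).
  assert (E1 : Dsq (w1,w2) (inv_pt (p1,p2)) = Q / q).
  { unfold Dsq, inv_pt, pscale, Q, q, qw, dot in *; simpl in *. field. lra. }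
  assert (E2 : Dsq (p1,p2) (inv_pt (w1,w2)) = Q / qw).
  { unfold Dsq, inv_pt, pscale, Q, q, qw, dot in *; simpl in *. field. lra. }
  assert (E3 : Dsq (inv_pt (p1,p2)) (inv_pt (w1,w2)) = Dsq (p1,p2) (w1,w2) / (q * qw)).
  { unfold Dsq, inv_pt, pscale, Q, q, qw, dot in *; simpl in *. field. lra. }
  assert (E4 : Dsq (w1,w2) (p1,p2) = Dsq (p1,p2) (w1,w2)).
  { unfold Dsq; simpl; ring. }
  assert (EQ : Q = Dsq (p1,p2) (w1,w2) + (1 - q) * (1 - qw)).
  { unfold Dsq, Q, q, qw, dot; simpl; ring. }
  assert (HQ : 0 <= Q).
  { assert (0 <= Dsq (w1,w2) (inv_pt (p1,p2))) by (unfold Dsq; apply Rplus_le_le_0_compat; apply pow2_ge_0).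
    rewrite E1 in H. replace Q with (q * (Q/q)) by (field; lra). apply Rmult_le_pos; lra. }
  rewrite <- EQ.
  assert (P3 : 0 < Defs.dist (w1,w2) (p1,p2)) by (apply dist_pos; lra).
  assert (P4 : 0 < Defs.dist (inv_pt (p1,p2)) (inv_pt (w1,w2))).
  { apply dist_pos. rewrite E3. apply Rdiv_lt_0_compat; nra. }
  apply sq_inj.
  - unfold abs_ratio. apply Rle_mult_inv_pos. apply Rmult_le_pos; apply sqrt_pos. nra.
  - apply Rle_mult_inv_pos; lra.
  - unfold abs_ratio.
    replace ((Defs.dist (w1,w2) (inv_pt (p1,p2)) * Defs.dist (p1,p2) (inv_pt (w1,w2)) /
        (Defs.dist (w1,w2) (p1,p2) * Defs.dist (inv_pt (p1,p2)) (inv_pt (w1,w2)))) ^ 2)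
      with (Defs.dist (w1,w2) (inv_pt (p1,p2)) ^2 * Defs.dist (p1,p2) (inv_pt (w1,w2)) ^2 /
        (Defs.dist (w1,w2) (p1,p2) ^2 * Defs.dist (inv_pt (p1,p2)) (inv_pt (w1,w2)) ^2))
      by (field; lra).
    rewrite !dist_Dsq, E1, E2, E3, E4. field. repeat split; lra.
Qed.

Lemma rho_eq x y z : 0 <= dot x x < 1 -> 0 <= dot y y < 1 -> 0 <= dot z z < 1 ->
  Dsq x z * (1 - dot y y) = Dsq y z * (1 - dot x x) -> rho x z = rho z y.
Proof.
  intros Hx Hy Hz E. unfold rho. f_equal. f_equal.
  assert (Nx : norm x ^ 2 = dot x x) by (rewrite norm_sq; unfold dot; ring).
  assert (Ny : norm y ^ 2 = dot y y) by (rewrite norm_sq; unfold dot; ring).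
  assert (Nz : norm z ^ 2 = dot z z) by (rewrite norm_sq; unfold dot; ring).
  rewrite Nx, Ny, Nz.
  assert (Sx : 0 < sqrt (1 - dot x x)) by (apply sqrt_lt_R0; lra).
  assert (Sy : 0 < sqrt (1 - dot y y)) by (apply sqrt_lt_R0; lra).
  assert (Sz : 0 < sqrt (1 - dot z z)) by (apply sqrt_lt_R0; lra).
  pose proof (sqrt_pos (dot (psub x z) (psub x z))). pose proof (sqrt_pos (dot (psub z y) (psub z y))).
  apply sq_inj.
  - apply Rle_mult_inv_pos. apply sqrt_pos. nra.
  - apply Rle_mult_inv_pos. apply sqrt_pos. nra.
  - replace ((Defs.dist x z / (sqrt (1 - dot x x) * sqrt (1 - dot z z))) ^ 2) with
      (Defs.dist x z ^ 2 / (sqrt (1 - dot x x) ^ 2 * sqrt (1 - dot z z) ^ 2)) by (field; lra).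
    replace ((Defs.dist z y / (sqrt (1 - dot z z) * sqrt (1 - dot y y))) ^ 2) with
      (Defs.dist z y ^ 2 / (sqrt (1 - dot z z) ^ 2 * sqrt (1 - dot y y) ^ 2)) by (field; lra).
    rewrite !dist_Dsq, !pow2_sqrt by lra.
    assert (Dsq z y = Dsq y z) by (unfold Dsq; ring). rewrite H1.
    field_simplify_eq; [|lra].
    lra.
Qed.

Lemma Dsq_pos p q : p <> q -> 0 < Dsq p q.
Proof. intro H. destruct p as [p1 p2], q as [q1 q2]; unfold Dsq; simpl.
  destruct (Req_dec p1 q1); destruct (Req_dec p2 q2).
  - subst; exfalso; auto.
  - assert (0 < (p2 - q2)^2) by nra. pose proof (pow2_ge_0 (p1-q1)). lra.
  - assert (0 < (p1 - q1)^2) by nra. pose proof (pow2_ge_0 (p2-q2)). lra.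
  - assert (0 < (p1 - q1)^2) by nra. pose proof (pow2_ge_0 (p2-q2)). lra.
Qed.

Lemma Dsq_self p : Dsq p p = 0.
Proof. unfold Dsq; ring. Qed.

Lemma par2 n w c x : dot n w = 0 -> dot n c = 0 -> dot n x <> 0 -> cross w c = 0.
Proof. destruct n as [n1 n2], w as [w1 w2], c as [c1 c2], x as [x1 x2]; unfold dot, cross; simpl.
  intros H1 H2 H3. destruct (Req_dec (w1 * c2 - w2 * c1) 0) as [|Hne]; auto. exfalso.
  assert (n1 * (w1 * c2 - w2 * c1) = 0).
  { replace (n1 * (w1 * c2 - w2 * c1)) with (c2*(n1*w1+n2*w2) - w2*(n1*c1+n2*c2)) by ring. rewrite H1, H2; ring. }
  assert (n2 * (w1 * c2 - w2 * c1) = 0).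
  { replace (n2 * (w1 * c2 - w2 * c1)) with (w1*(n1*c1+n2*c2) - c1*(n1*w1+n2*w2)) by ring. rewrite H1, H2; ring. }
  apply Rmult_integral in H. apply Rmult_integral in H0.
  destruct H; [|contradiction]. destruct H0; [|contradiction]. subst. apply H3; ring. Qed.

Lemma w_mult w c : dot c c <> 0 -> cross w c = 0 -> w = pscale (dot w c / dot c c) c.
Proof. destruct w as [w1 w2], c as [c1 c2]; unfold dot, cross, pscale; simpl. intros H1 H2.
  assert (E : w1*c2 = w2*c1) by lra.
  f_equal; field_simplify_eq; auto.
  - replace (c1*w2*c2) with (c2*(w2*c1)) by ring. rewrite <- E; ring.
  - replace (w1*c1*c2) with (c1*(w1*c2)) by ring. rewrite E; ring.
Qed.

Lemma dot_scale t c : dot (pscale t c) (pscale t c) = t * t * dot c c.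
Proof. destruct c; unfold dot, pscale; simpl; ring. Qed.
Lemma dota_scale a t c : dot a (pscale t c) = t * dot a c.
Proof. destruct c, a; unfold dot, pscale; simpl; ring. Qed.
Lemma dotn_scale a t c : dot (pscale t c) a = t * dot c a.
Proof. destruct c, a; unfold dot, pscale; simpl; ring. Qed.
Lemma dot_comm p q : dot p q = dot q p.
Proof. destruct p, q; unfold dot; simpl; ring. Qed.

Lemma pow_pos p a : dot p p - 2 * dot a p + 1 = 0 -> 0 < dot p p.
Proof. intro E. destruct p as [p1 p2], a as [a1 a2]; unfold dot in *; simpl in *.
  destruct (Req_dec p1 0); destruct (Req_dec p2 0); try nra. Qed.

Theorem part1 (x y a : pt) (ra : R) (xs ys : pt) (c : pt) (rc : R) (z z' : pt) :
  norm x < 1 -> norm y < 1 -> x <> origin -> y <> origin -> norm x <> norm y ->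
  0 < ra ->
  on_circle a ra x -> on_circle a ra y ->
  on_circle a ra (inv_pt x) -> on_circle a ra (inv_pt y) ->
  arc_order4_in_closed_disk a ra xs x y ys ->
  0 < rc ->
  on_circle c rc origin -> on_circle c rc x -> on_circle c rc y ->
  on_line origin c z -> on_circle a ra z -> norm z < 1 ->
  on_line origin c z' -> on_circle a ra z' -> 1 <= norm z' ->
  semicircle_endpoints a ra (inv_pt x) (inv_pt y) ->
     hyp_midpoint_J a ra x y z /\
     orthogonal_circles a ra c rc /\
     abs_ratio z x (inv_pt x) z' = abs_ratio z y (inv_pt y) z'.
Proof.
  intros Nx Ny Hx0 Hy0 Hn Hra Cx Cy Cxi Cyi Harc Hrc C0 Ccx Ccy Lz Cz Nz Lz' Cz' Nz' Hsemi.
  pose proof (L_lt1 _ Nx) as Qx1. pose proof (L_lt1 _ Ny) as Qy1.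
  pose proof (L_pos _ Hx0) as Qx0. pose proof (L_pos _ Hy0) as Qy0.
  assert (Ha : dot a a = 1 + ra*ra) by (apply (orthoA a ra x); auto).
  pose proof (pow1 _ _ _ Hra Ha Cx) as Px. pose proof (pow1 _ _ _ Hra Ha Cy) as Py.
  pose proof (pow1 _ _ _ Hra Ha Cz) as Pz. pose proof (pow1 _ _ _ Hra Ha Cz') as Pz'.
  assert (Hxy : x <> y).
  { intro E. apply Hn. rewrite E. reflexivity. }
  pose proof (L_circ _ _ _ C0 Hrc) as Pc0.
  assert (HC : dot c c = rc * rc).
  { unfold dot, origin in *; simpl in *. lra. }
  pose proof (L_circ _ _ _ Ccx Hrc) as Pcx. pose proof (L_circ _ _ _ Ccy Hrc) as Pcy.
  rewrite HC in Pcx, Pcy.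
  assert (Ecx : dot c x = dot x x / 2) by lra.
  assert (Ecy : dot c y = dot y y / 2) by lra.
  assert (HC0 : 0 < dot c c) by (rewrite HC; nra).
  destruct Hsemi as [_ [_ Ea]].
  assert (Hac : dot a c = / 2).
  { assert (dot a c = / 2 * (dot c x / dot x x + dot c y / dot y y)).
    { rewrite Ea. clear -Qx0 Qy0. destruct x as [x1 x2], y as [y1 y2], c as [c1 c2].
      unfold inv_pt, pscale, padd, dot in *; simpl in *. field. lra. }
    rewrite H, Ecx, Ecy. field. lra. }
  set (n := nvec x y a).
  assert (Hnc : dot n c = 0).
  { assert (dot n c = (dot a c - dot c x)*(1-dot y y) - (dot a c - dot c y)*(1 - dot x x)).
    { unfold n, nvec. clear. destruct x, y, a, c; unfold dot; simpl; ring. }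
    rewrite H, Hac, Ecx, Ecy. field. }
  destruct (line0 _ _ Lz) as [t Et]. destruct (line0 _ _ Lz') as [t' Et'].
  assert (Rt : t * t * dot c c - t + 1 = 0).
  { rewrite Et, dot_scale, dota_scale, Hac in Pz. lra. }
  assert (Rt' : t' * t' * dot c c - t' + 1 = 0).
  { rewrite Et', dot_scale, dota_scale, Hac in Pz'. lra. }
  pose proof (L_lt1 _ Nz) as Qz1. pose proof (L_ge1 _ Nz') as Qz'1.
  pose proof (pow_pos _ _ Pz) as Qz0.
  assert (Tz : t * t * dot c c < 1) by (rewrite Et, dot_scale in Qz1; lra).
  assert (Tz' : 1 <= t' * t' * dot c c) by (rewrite Et', dot_scale in Qz'1; lra).
  assert (Hnz : dot n z = 0) by (rewrite Et, dot_comm, dotn_scale, dot_comm, Hnc; ring).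
  assert (G0 : Dsq x z * (1 - dot y y) = Dsq y z * (1 - dot x x)).
  { pose proof (gid x y a z Pz) as E. fold n in E. rewrite Hnz in E. lra. }
  assert (Hnx : dot n x < 0).
  { pose proof (gid x y a x Px) as E. fold n in E. rewrite Dsq_self in E.
    pose proof (Dsq_pos y x (not_eq_sym Hxy)).
    assert (0 < Dsq y x * (1 - dot x x)) by (apply Rmult_lt_0_compat; lra). lra. }
  assert (Hny : 0 < dot n y).
  { pose proof (gid x y a y Py) as E. fold n in E. rewrite Dsq_self in E.
    pose proof (Dsq_pos x y Hxy).
    assert (0 < Dsq x y * (1 - dot y y)) by (apply Rmult_lt_0_compat; lra). lra. }
  assert (Hxz : x <> z).
  { intro E. rewrite <- E in Hnz. lra. }
  assert (Hyz : y <> z).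
  { intro E. rewrite <- E in Hnz. lra. }
  split; [|split].
  -
    split.
    + destruct Harc as [t1 [t2 [t3 [t4 [Hord [Habs [E1 [E2 [E3 [E4 Hin]]]]]]]]]].
      assert (Ha' : fst a ^ 2 + snd a ^ 2 = 1 + ra ^ 2) by (unfold dot in Ha; nra).
      set (G := fun t => fst n * (fst a + ra * cos t) + snd n * (snd a + ra * sin t)).
      assert (HG : forall t, G t = dot n (circ_pt a ra t)) by (intro; reflexivity).
      assert (G2 : G t2 = dot n x) by (rewrite HG, <- E2; reflexivity).
      assert (G3 : G t3 = dot n y) by (rewrite HG, <- E3; reflexivity).
      destruct (IVT_cor G (Rmin t2 t3) (Rmax t2 t3) (Gcont n a ra)) as [tz [Htz Gz]].
      { unfold Rmin, Rmax; destruct (Rle_dec t2 t3); lra. }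
      { unfold Rmin, Rmax; destruct (Rle_dec t2 t3); rewrite ?G2, ?G3; nra. }
      assert (Inside : forall s, Rmin t2 t3 <= s <= Rmax t2 t3 -> norm (circ_pt a ra s) < 1).
      { intros s Hs. apply (interior_strict a ra (Rmin t1 t4) (Rmax t1 t4) s Hra Ha' Hin).
        apply (between t1 t2 t3 t4 Hord s Hs). }
      set (w := circ_pt a ra tz).
      assert (Hnw : dot n w = 0) by (unfold w; rewrite <- HG; exact Gz).
      assert (Pw : dot w w - 2 * dot a w + 1 = 0) by apply circ_pow, Ha.
      assert (Nw : dot w w < 1) by (apply L_lt1, Inside, Htz).
      assert (Cw : cross w c = 0) by (apply (par2 n w c x); lra).
      pose proof (w_mult w c ltac:(lra) Cw) as Ew.
      set (s := dot w c / dot c c) in Ew. clearbody s.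
      assert (Rs : s * s * dot c c - s + 1 = 0).
      { rewrite Ew, dot_scale, dota_scale, Hac in Pw. lra. }
      assert (Ts : s * s * dot c c < 1) by (rewrite Ew, dot_scale in Nw; lra).
      assert (Hst : s = t) by (apply (uniq_root (dot c c)); lra).
      assert (Hwz : w = z) by (rewrite Ew, Et, Hst; reflexivity).
      exists t2, tz, t3. split; [|split; [|split; [|split; [|split]]]].
      * revert Htz; unfold Rmin, Rmax; destruct (Rle_dec t2 t3); lra.
      * assert (Rabs (t4 - t1) < 2 * PI) by exact Habs.
        revert H; unfold Rabs; destruct (Rcase_abs (t3 - t2)); destruct (Rcase_abs (t4 - t1)); lra.
      * exact E2.
      * rewrite <- Hwz; reflexivity.
      * exact E3.
      * exact Inside.
    + apply rho_eq; try lra; exact G0.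
  - exists x. split; [exact Cx|split; [exact Ccx|]].
    assert (dot (psub x a) (psub x c) = dot x x - dot a x - dot c x + dot a c).
    { clear. destruct x, a, c; unfold dot, psub; simpl; ring. }
    rewrite H, Ecx, Hac. lra.
  - assert (Hz' : z' = inv_pt z).
    { assert (tt' : t * t' * dot c c = 1) by (apply inv_root; lra).
      assert (t <> 0) by (intro; subst; lra).
      assert (Ht' : t' = / (t * dot c c)).
      { rewrite <- (Rmult_1_l (/ (t * dot c c))). rewrite <- tt'. field. split; lra. }
      rewrite Et', Et, Ht'. unfold inv_pt. rewrite dot_scale.
      revert HC0 H. clear. intros HC0 H. destruct c as [c1 c2]; unfold pscale, dot in *; simpl in *.
      f_equal; field; split; lra. }
    rewrite Hz'.
    rewrite (absr x z), (absr y z); try lra; try (apply Dsq_pos; auto).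
    pose proof (Dsq_pos _ _ Hxz). pose proof (Dsq_pos _ _ Hyz).
    field_simplify_eq; [|lra].
    nra.
Qed.

Theorem proposition4p29
  (x y a : pt) (ra : R) (xs ys : pt) (c : pt) (rc : R) (z z' b d b' d' : pt) :
  norm x < 1 -> norm y < 1 -> x <> origin -> y <> origin ->
  ~ collinear origin x y -> norm x <> norm y ->
  0 < ra ->
  on_circle a ra x -> on_circle a ra y ->
  on_circle a ra (inv_pt x) -> on_circle a ra (inv_pt y) ->
  norm xs = 1 -> norm ys = 1 -> on_circle a ra xs -> on_circle a ra ys ->
  arc_order4_in_closed_disk a ra xs x y ys ->
  0 < rc ->
  on_circle c rc origin -> on_circle c rc x -> on_circle c rc y ->
  on_line origin c z -> on_circle a ra z -> norm z < 1 ->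
  on_line origin c z' -> on_circle a ra z' -> 1 <= norm z' ->
  on_line xs y b -> on_line x (inv_pt y) b ->
  on_line (inv_pt x) y d -> on_line xs (inv_pt y) d ->
  on_line x ys b' -> on_line (inv_pt x) y b' ->
  on_line x (inv_pt y) d' -> on_line (inv_pt x) ys d' ->
  (semicircle_endpoints a ra (inv_pt x) (inv_pt y) ->
     hyp_midpoint_J a ra x y z /\
     orthogonal_circles a ra c rc /\
     abs_ratio z x (inv_pt x) z' = abs_ratio z y (inv_pt y) z')
  /\
  (collinear origin b d /\ collinear origin b' d').
Proof.
  intros H1 H2 H3 H4 H5 H6 H7 H8 H9 H10 H11 H12 H13 H14 H15 H16 H17 H18 H19 H20 H21 H22 H23 H24 H25 H26 H27 H28 H29 H30 H31 H32 H33 H34. split.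
  - intro Hs. exact (part1 x y a ra xs ys c rc z z' H1 H2 H3 H4 H6 H7 H8 H9 H10 H11 H16 H17 H18 H19 H20 H21 H22 H23 H24 H25 H26 Hs).
  - exact (part2 x y a ra xs ys b d b' d' H1 H2 H3 H4 H6 H7 H8 H9 H10 H11 H12 H13 H14 H15 H27 H28 H29 H30 H31 H32 H33 H34).
Qed.
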